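(* Let $P$ be a right-LCM monoid and let $P_1$ be a submonoid of $P$ such that the inclusion $P_1\subseteq P$ is closed under factorization and preserves orthogonality. Then $P_1$ respects the LCM of $P$, i.e. for all $x,y\in P_1$, $xP\cap yP=(xP_1\cap yP_1)P$.
   Context: A monoid $P$ is right-LCM if it is left-cancellative and for all $p,q\in P$ either $pP\cap qP=\emptyset$ or $pP\cap qP=rP$ for some $r\in P$. A submonoid $P_1\subseteq P$ is closed under factorization in $P$ if whenever $x,y\in P$ satisfy $xy\in P_1$, then $x,y\in P_1$ (such a $P_1$ is itself right-LCM). For a right-LCM submonoid $P_1$ of $P$, the inclusion preserves orthogonality if for all $x,y\in P_1$: $xP_1\cap yP_1=\emptyset$ if and only if $xP\cap yP=\emptyset$. *)

(* Defs.v *)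
Record is_monoid {M : Type} (mul : M -> M -> M) (e : M) : Prop := {
  mon_assoc : forall x y z, mul x (mul y z) = mul (mul x y) z;
  mon_unit_l : forall x, mul e x = x;
  mon_unit_r : forall x, mul x e = x }.

Definition left_cancellative {M : Type} (mul : M -> M -> M) : Prop :=
  forall p x y, mul p x = mul p y -> x = y.

Definition rideal {M : Type} (mul : M -> M -> M) (S : M -> Prop) (x : M) : M -> Prop :=
  fun z => exists s, S s /\ z = mul x s.

Definition set_mul {M : Type} (mul : M -> M -> M) (A S : M -> Prop) : M -> Prop :=
  fun z => exists a s, A a /\ S s /\ z = mul a s.

Definition set_inter {M : Type} (A B : M -> Prop) : M -> Prop := fun z => A z /\ B z.

Definition set_empty {M : Type} (A : M -> Prop) : Prop := forall z, ~ A z.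

Definition set_eq {M : Type} (A B : M -> Prop) : Prop := forall z, A z <-> B z.

Definition full {M : Type} : M -> Prop := fun _ => True.

(* Right-LCM for the monoid (S, mul, e) where S is a submonoid of M
   (take S := full for the whole monoid). *)
Definition right_LCM {M : Type} (mul : M -> M -> M) (S : M -> Prop) : Prop :=
  (forall p x y, S p -> S x -> S y -> mul p x = mul p y -> x = y) /\
  (forall p q, S p -> S q ->
     set_empty (set_inter (rideal mul S p) (rideal mul S q)) \/
     exists r, S r /\ set_eq (set_inter (rideal mul S p) (rideal mul S q)) (rideal mul S r)).

Definition is_submonoid {M : Type} (mul : M -> M -> M) (e : M) (S : M -> Prop) : Prop :=
  S e /\ forall x y, S x -> S y -> S (mul x y).

Definition closed_under_factorization {M : Type} (mul : M -> M -> M) (S : M -> Prop) : Prop :=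
  forall x y, S (mul x y) -> S x /\ S y.

Definition preserves_orthogonality {M : Type} (mul : M -> M -> M) (S : M -> Prop) : Prop :=
  forall x y, S x -> S y ->
    (set_empty (set_inter (rideal mul S x) (rideal mul S y)) <->
     set_empty (set_inter (rideal mul full x) (rideal mul full y))).

(* Main.v *)
Require Import Defs.
From Stdlib Require Import Classical.

Theorem mainTheorem3 (M : Type) (mul : M -> M -> M) (e : M) (P1 : M -> Prop) :
  is_monoid mul e ->
  right_LCM mul full ->
  is_submonoid mul e P1 ->
  closed_under_factorization mul P1 ->
  right_LCM mul P1 ->
  preserves_orthogonality mul P1 ->
  forall x y, P1 x -> P1 y ->
    set_eq (set_inter (rideal mul full x) (rideal mul full y))
           (set_mul mul (set_inter (rideal mul P1 x) (rideal mul P1 y)) full).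
Proof.
  intros Hm [Hcan HL] Hsub Hfac HL1 Hort x y Hx Hy z. split.
  - intros Hz.
    assert (Hne : ~ set_empty (set_inter (rideal mul P1 x) (rideal mul P1 y))).
    { intros Hemp. apply (proj1 (Hort x y Hx Hy) Hemp z Hz). }
    destruct (HL x y I I) as [Hemp | [t [_ Ht]]].
    + exfalso; exact (Hemp z Hz).
    + assert (Hr : exists r, set_inter (rideal mul P1 x) (rideal mul P1 y) r).
      { apply Classical_Prop.NNPP. intros Hn. apply Hne. intros r Hr. apply Hn. eauto. }
      destruct Hr as [r [[p [Hp Hrp]] [q [Hq Hrq]]]].
      assert (Hrt : rideal mul full t r).
      { apply Ht. split; [exists p | exists q]; split; auto; exact I. }
      destruct Hrt as [u [_ Hru]].
      assert (Htt : set_inter (rideal mul full x) (rideal mul full y) t).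
      { apply Ht. exists e. split; [exact I | symmetry; apply (mon_unit_r _ _ Hm)]. }
      destruct Htt as [[a [_ Ha]] [b [_ Hb]]].
      assert (Hpa : p = mul a u).
      { apply (Hcan x); [exact I|exact I|exact I|]. rewrite <- Hrp, (mon_assoc _ _ Hm), <- Ha. exact Hru. }
      assert (Hqb : q = mul b u).
      { apply (Hcan y); [exact I|exact I|exact I|]. rewrite <- Hrq, (mon_assoc _ _ Hm), <- Hb. exact Hru. }
      subst p q.
      destruct (proj1 (Ht z) Hz) as [w [_ Hw]].
      exists t, w. split; [split|split; [exact I|exact Hw]].
      * exists a. split; auto. exact (proj1 (Hfac _ _ Hp)).
      * exists b. split; auto. exact (proj1 (Hfac _ _ Hq)).
  - intros [a [s [[[p [Hp Ha]] [q [Hq Hb]]] [_ Hz]]]].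
    split.
    + exists (mul p s). split; [exact I|]. rewrite Hz, Ha. symmetry; apply (mon_assoc _ _ Hm).
    + exists (mul q s). split; [exact I|]. rewrite Hz, Hb. symmetry; apply (mon_assoc _ _ Hm).
Qed.
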